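(* Let $\mu$ be a fuzzy sub $\Gamma$-hypersemigroup of a fuzzy $\Gamma$-hypersemigroup $(M,\circ)$. Then $\mu$ is a fuzzy $\Gamma$-hyper bi-ideal of $(M,\circ)$ if and only if $(\mu\circ\alpha\circ\chi_M)\circ\beta\circ\mu\subseteq\mu$ for all $\alpha,\beta\in\Gamma$.
   Context: $M,\Gamma$ are nonempty sets; a fuzzy subset of $M$ is a map $M\to[0,1]$. A fuzzy $\Gamma$-hyperoperation assigns to each $(a,\gamma,b)\in M\times\Gamma\times M$ a fuzzy subset $a\circ\gamma\circ b$. For $a\in M$ and fuzzy $\mu$: $(a\circ\gamma\circ\mu)(r)=\bigvee_{t\in M}((a\circ\gamma\circ t)(r)\wedge\mu(t))$ if $\mu\ne0$, else $0$; $(\mu\circ\gamma\circ a)(r)=\bigvee_{t\in M}(\mu(t)\wedge(t\circ\gamma\circ a)(r))$ if $\mu\ne0$, else $0$. For fuzzy $\mu,\nu$: $(\mu\circ\gamma\circ\nu)(t)=\bigvee_{p,q\in M}(\mu(p)\wedge(p\circ\gamma\circ q)(t)\wedge\nu(q))$. $(M,\circ)$ is a fuzzy $\Gamma$-hypersemigroup if $(a\circ\alpha\circ b)\circ\beta\circ c=a\circ\alpha\circ(b\circ\beta\circ c)$ for all $a,b,c\in M$, $\alpha,\beta\in\Gamma$. $\chi_M$ is the constant function $1$. For fuzzy sets, $\mu\subseteq\nu$ means $\mu(x)\le\nu(x)$ for all $x$. A fuzzy sub $\Gamma$-hypersemigroup is a fuzzy subset $\mu$ with $\mu\circ\gamma\circ\mu\subseteq\mu$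 for all $\gamma\in\Gamma$. A fuzzy $\Gamma$-hyper bi-ideal is a fuzzy sub $\Gamma$-hypersemigroup $\mu$ with $(\mu\circ\alpha\circ y)\circ\beta\circ\mu\subseteq\mu$ for all $y\in M$, $\alpha,\beta\in\Gamma$. *)

(* Defs.v *)
From mathcomp Require Import all_boot all_order all_algebra.
From mathcomp Require Import boolp classical_sets reals.
Set Implicit Arguments. Unset Strict Implicit. Unset Printing Implicit Defensive.
Import Order.TTheory GRing.Theory Num.Theory.
Local Open Scope ring_scope.
Local Open Scope classical_set_scope.

Section Fuzzy.
Variables (R : realType) (M G : Type).

Definition is_fuzzy (mu : M -> R) : Prop := forall x, 0 <= mu x <= 1.

Definition is_fuzzy_hop (hop : M -> G -> M -> M -> R) : Prop :=
  forall a g b, is_fuzzy (hop a g b).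

Definition fzero (mu : M -> R) : Prop := forall x, mu x = 0.

Definition el_fz (hop : M -> G -> M -> M -> R) (a : M) (g : G) (mu : M -> R) : M -> R :=
  fun r => if pselect (fzero mu) then 0
           else sup (range (fun t => Num.min (hop a g t r) (mu t))).

Definition fz_el (hop : M -> G -> M -> M -> R) (mu : M -> R) (g : G) (a : M) : M -> R :=
  fun r => if pselect (fzero mu) then 0
           else sup (range (fun t => Num.min (mu t) (hop t g a r))).

Definition fz_fz (hop : M -> G -> M -> M -> R) (mu : M -> R) (g : G) (nu : M -> R) : M -> R :=
  fun t => sup (range (fun pq : M * M =>
             Num.min (mu pq.1) (Num.min (hop pq.1 g pq.2 t) (nu pq.2)))).

Definition chi_M : M -> R := fun _ => 1.

Definition fsubset (mu nu : M -> R) : Prop := forall x, mu x <= nu x.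

Definition fuzzy_GH_semigroup (hop : M -> G -> M -> M -> R) : Prop :=
  is_fuzzy_hop hop /\
  forall (a b c : M) (al be : G),
    fz_el hop (hop a al b) be c = el_fz hop a al (hop b be c).

Definition fuzzy_sub_GH_semigroup (hop : M -> G -> M -> M -> R) (mu : M -> R) : Prop :=
  is_fuzzy mu /\ forall g, fsubset (fz_fz hop mu g mu) mu.

Definition fuzzy_GH_bi_ideal (hop : M -> G -> M -> M -> R) (mu : M -> R) : Prop :=
  fuzzy_sub_GH_semigroup hop mu /\
  forall (y : M) (al be : G), fsubset (fz_fz hop (fz_el hop mu al y) be mu) mu.

End Fuzzy.

(* Main.v *)
Require Import Defs.
From mathcomp Require Import all_boot all_order all_algebra.
From mathcomp Require Import boolp classical_sets reals.
Import Order.TTheory GRing.Theory Num.Theory.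
Local Open Scope ring_scope.
Local Open Scope classical_set_scope.

Section H.
Variables (R : realType) (I : Type).

Lemma rsup_ub (f : I -> R) (b : R) : inhabited I -> (forall i, f i <= b) ->
  sup (range f) <= b.
Proof.
move=> [i] Hb; apply: ge_sup; first by exists (f i), i.
by move=> _ [j _ <-].
Qed.

Lemma rsup_le (f : I -> R) (b : R) i : (forall j, f j <= b) -> f i <= sup (range f).
Proof.
move=> Hb; apply: ub_le_sup; last by exists i.
by exists b => _ [j _ <-].
Qed.

Lemma rsup_gt (f : I -> R) x : inhabited I -> x < sup (range f) -> exists i, x < f i.
Proof.
move=> [i] H.
have ne : range f !=set0 by exists (f i), i.
have [_ [j _ <-] Hj] := sup_gt ne H.
by exists j.
Qed.
End H.

Theorem theorem4p12 (R : realType) (M G : Type) (HM : inhabited M) (HG : inhabited G)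
  (hop : M -> G -> M -> M -> R) (Hhop : fuzzy_GH_semigroup hop)
  (mu : M -> R) (Hmu : fuzzy_sub_GH_semigroup hop mu) :
  fuzzy_GH_bi_ideal hop mu <->
  (forall al be : G,
     fsubset (fz_fz hop (fz_fz hop mu al (@chi_M R M)) be mu) mu).
Proof.
have HMM : inhabited (M * M) by case: HM => m; constructor; exact: (m, m).
have mu1 : forall x, mu x <= 1 by move=> x; case/andP: (Hmu.1 x).
have bnd : forall (nu : M -> R) be t (pq : M * M),
    Num.min (nu pq.1) (Num.min (hop pq.1 be pq.2 t) (mu pq.2)) <= mu pq.2.
  by move=> nu be t pq; rewrite !ge_min lexx !orbT.
have bnd1 : forall (nu : M -> R) be t (pq : M * M),
    Num.min (nu pq.1) (Num.min (hop pq.1 be pq.2 t) (mu pq.2)) <= 1.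
  by move=> nu be t pq; apply: le_trans (bnd _ _ _ _) (mu1 _).
split.
- move=> [_ Hbi] al be t.
  case: (pselect (fzero mu)) => [Hz|Hnz].
    rewrite /fz_fz; apply: rsup_ub => // pq; rewrite (Hz t) -(Hz pq.2).
    by rewrite !ge_min lexx !orbT.
  rewrite /fz_fz; apply: rsup_ub => // [[x z]] /=.
  rewrite leNgt; apply/negP => Hlt.
  move: Hlt; rewrite !lt_min => /and3P [H1 H2 H3].
  have [[p q] /= Hs] := @rsup_gt _ _ _ _ HMM H1.
  move: Hs; rewrite !lt_min => /and3P [Hp Hh _].
  have := Hbi q al be t; rewrite /fsubset /fz_fz => Hq.
  have Hel : Num.min (mu p) (hop p al q x) <= fz_el hop mu al q x.
    rewrite /fz_el; destruct (pselect _) as [Hz0|Hn0]; first by exact: (False_ind _ (Hnz Hz0)).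
    apply: (@rsup_le _ _ (fun t0 => Num.min (mu t0) (hop t0 al q x)) 1).
    by move=> j; rewrite ge_min mu1.
  have := le_trans (@rsup_le _ _ _ _ (x, z) (bnd1 (fz_el hop mu al q) be t)) Hq.
  rewrite /= => Hf.
  suff: mu t < mu t by rewrite ltxx.
  apply: (lt_le_trans _ Hf); rewrite !lt_min H2 H3 andbT.
  by rewrite andbT; apply: lt_le_trans Hel; rewrite lt_min Hp Hh.
- move=> Hc; split => // y al be t.
  case: (pselect (fzero mu)) => [Hz|Hnz].
    rewrite /fz_fz; apply: rsup_ub => // pq; rewrite (Hz t) -(Hz pq.2).
    by rewrite !ge_min lexx !orbT.
  apply: le_trans (Hc al be t).
  rewrite /fz_fz; apply: rsup_ub => // [[x z]] /=.
  apply: le_trans (@rsup_le _ _ _ _ (x, z) (bnd1 (fz_fz hop mu al (@chi_M R M)) be t)) => /=.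
  rewrite le_min [X in _ && X]ge_min lexx orbT andbT ge_min; apply/orP; left.
  rewrite /fz_el; destruct (pselect _) as [Hz0|Hn0]; first by exact: (False_ind _ (Hnz Hz0)).
  apply: rsup_ub => // p.
  apply: le_trans (@rsup_le _ _ _ 1 (p, y) _) => /=.
    have [_ h1] := andP (Hhop.1 p al y x); by rewrite /chi_M (min_l h1).
  by move=> [a b]; rewrite /= ge_min mu1.
Qed.
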